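(* Let $\alpha>0$, $\beta\in\mathbb{R}$, $\gamma>0$, $d\ge1$, $c\in\mathbb{R}$, write $x=\alpha(z-\beta)$, and let $$Q(z)=\frac{\operatorname{sign}(x)}{d+1}|x|^{d+1}+c\,x,\qquad q(z)=Q'(z)=\alpha\big[|x|^d+c\big],\qquad p(z)=\frac{1}{1+e^{-Q(z)/\gamma}}.$$ Let $H(z)=\gamma\log(1+e^{Q(z)/\gamma})$ and $\mathcal{L}_m(\hat s,s)=H(\hat s)-H(s)-(\hat s-s)H'(s)$. If $c\ge\max\{\sqrt{2\gamma d},\,\gamma d-\tfrac12\}$, then $\mathcal{L}_m(\hat s,s)$ is convex in $\hat s\in\mathbb{R}$ for every $s\in\mathbb{R}$ (i.e. a convex selective matching loss with this scaling exists).
   Context: $H$ is the $\gamma$-regularized composite Softplus primitive, with link $H'(z)=q(z)p(z)$. *)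

(* Defs.v *)
From HB Require Import structures.
From mathcomp Require Import all_boot all_order all_algebra.
From mathcomp Require Import all_classical all_reals all_analysis.
Set Implicit Arguments. Unset Strict Implicit. Unset Printing Implicit Defensive.
Import Order.TTheory GRing.Theory Num.Theory.
Local Open Scope ring_scope.

Section SoftplusDefs.
Variable R : realType.

Definition Qsc (alpha beta d c : R) (z : R) : R :=
  let x := alpha * (z - beta) in
  Num.sg x / (d + 1) * (`|x| `^ (d + 1)) + c * x.

Definition qsc (alpha beta d c : R) (z : R) : R :=
  let x := alpha * (z - beta) in alpha * (`|x| `^ d + c).

Definition psc (alpha beta gamma d c : R) (z : R) : R :=
  1 / (1 + expR (- Qsc alpha beta d c z / gamma)).

Definition Hsc (alpha beta gamma d c : R) (z : R) : R :=
  gamma * ln (1 + expR (Qsc alpha beta d c z / gamma)).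

Definition Lm (alpha beta gamma d c : R) (shat s : R) : R :=
  Hsc alpha beta gamma d c shat - Hsc alpha beta gamma d c s
  - (shat - s) * derive1 (Hsc alpha beta gamma d c) s.

Definition convex_on_R (f : R -> R) : Prop :=
  forall a b t : R, 0 <= t -> t <= 1 ->
    f (t * a + (1 - t) * b) <= t * f a + (1 - t) * f b.

End SoftplusDefs.

(* Main.v *)
Require Import Defs.
From HB Require Import structures.
From mathcomp Require Import all_boot all_order all_algebra.
From mathcomp Require Import all_classical all_reals all_analysis.
From mathcomp Require Import ring lra.
Set Implicit Arguments. Unset Strict Implicit. Unset Printing Implicit Defensive.
Import Order.TTheory GRing.Theory Num.Theory numFieldNormedType.Exports.
Local Open Scope ring_scope.
Local Open Scope classical_set_scope.

Lemma mvt_gen (R : realType) (f f' : R -> R) (a b : R) : a < b ->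
  continuous f -> (forall x, a < x < b -> is_derive x 1 f (f' x)) ->
  exists c, [/\ a < c, c < b & f b - f a = f' c * (b - a)].
Proof.
move=> ab cf df.
have h1 : forall x, x \in `]a, b[%R -> is_derive x 1 f (f' x).
  by move=> x; rewrite in_itv /= => /df.
have h2 : {within `[a, b], continuous f}.
  by apply: continuous_subspaceT => x; apply: cf.
have [c + E] := @MVT R f f' a b ab h1 h2.
by rewrite in_itv /= => /andP[? ?]; exists c.
Qed.

Lemma mono_seg (R : realType) (f f' : R -> R) (a b : R) : a <= b ->
  continuous f -> (forall x, a < x < b -> is_derive x 1 f (f' x)) ->
  (forall x, a < x < b -> 0 <= f' x) -> f a <= f b.
Proof.
rewrite le_eqVlt => /predU1P[->|ab] // cf df dpos.
have [c [ac cb E]] := mvt_gen ab cf df.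
rewrite -subr_ge0 E mulr_ge0 ?dpos ?ac ?cb // subr_ge0 ltW //.
Qed.

Lemma deriv_cont (R : realType) (f f' : R -> R) :
  (forall x : R, is_derive x 1 f (f' x)) -> continuous f.
Proof.
move=> df x; apply/differentiable_continuous/derivable1_diffP.
by case: (df x).
Qed.

Lemma tangent_ineq (R : realType) (f g : R -> R) :
  (forall x : R, is_derive x 1 f (g x)) -> {homo g : x y / x <= y} ->
  forall x y, f x + g x * (y - x) <= f y.
Proof.
move=> df gm x y; have cf := deriv_cont df.
case: (ltgtP x y) => xy.
- have [c [xc cy E]] := mvt_gen xy cf (fun z _ => df z).
  rewrite -lerBrDl E ler_wpM2r ?subr_ge0 ?(ltW xy) //; exact/gm/ltW.
- have [c [yc cx E]] := mvt_gen xy cf (fun z _ => df z).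
  have -> : f y = f x - g c * (x - y) by rewrite -E; ring.
  have h : g c * (x - y) <= g x * (x - y).
    by rewrite ler_wpM2r ?subr_ge0 ?(ltW xy) //; exact/gm/ltW.
  have -> : g x * (y - x) = - (g x * (x - y)) by ring.
  lra.
- by rewrite xy subrr mulr0 addr0.
Qed.

Lemma convex_of_deriv (R : realType) (f g : R -> R) :
  (forall x : R, is_derive x 1 f (g x)) -> {homo g : x y / x <= y} ->
  convex_on_R f.
Proof.
move=> df gm a b t t0 t1.
set m := t * a + (1 - t) * b.
have ha := tangent_ineq df gm m a.
have hb := tangent_ineq df gm m b.
have e : t * (g m * (a - m)) + (1 - t) * (g m * (b - m)) = 0.
  rewrite /m; ring.
have t1' : 0 <= 1 - t by rewrite subr_ge0.
have := lerD (ler_wpM2l t0 ha) (ler_wpM2l t1' hb).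
have -> : t * (f m + g m * (a - m)) + (1 - t) * (f m + g m * (b - m)) = f m.
  rewrite /m; ring.
done.
Qed.

Definition uf (R : realType) (d : R) (y : R) : R := Num.sg y / (d + 1) * (`|y| `^ (d + 1)).

Lemma uf_pos (R : realType) (d x : R) : 0 < d -> 0 < x -> is_derive x 1 (uf d) (`|x| `^ d).
Proof.
move=> d0 x0.
have h := is_deriveZ ((d + 1)^-1) (is_derive1_powR (d + 1) x0).
apply: (near_eq_is_derive _ (is_derive_eq h _)).
  near=> y.
  have y0 : 0 < y by near: y; exact: lt_nbhsr.
  by rewrite /uf /= gtr0_sg // gtr0_norm // mul1r.
rewrite addrK gtr0_norm // /GRing.scale /= mulrA mulVf ?mul1r //.
by rewrite gt_eqF // ltr_wpDr // ltW.
Unshelve. all: by end_near. Qed.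

Lemma uf_neg (R : realType) (d x : R) : 0 < d -> x < 0 -> is_derive x 1 (uf d) (`|x| `^ d).
Proof.
move=> d0 x0.
have nx0 : 0 < - x by rewrite oppr_gt0.
have h1 := is_derive1_powR (d + 1) nx0.
have h2 : is_derive x 1 (fun y : R => - y) (-1) by apply: is_deriveNid.
have h3 := is_deriveZ (- (d + 1)^-1) (is_derive1_comp h1 h2).
apply: (near_eq_is_derive _ (is_derive_eq h3 _)).
  near=> y.
  have y0 : y < 0 by near: y; exact: lt_nbhsl.
  by rewrite /uf /= ltr0_sg // ltr0_norm // /GRing.scale /=; ring.
rewrite addrK ltr0_norm // /GRing.scale /= mulrN1 mulrN mulNr opprK mulrA mulVf ?mul1r //.
by rewrite gt_eqF // ltr_wpDr // ltW.
Unshelve. all: by end_near. Qed.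
Lemma cont_abs_pow (R : realType) (d : R) : 1 <= d ->
  continuous (fun z : R => `|z| `^ d).
Proof.
move=> d1 x.
have [->|x0] := eqVneq x 0.
  rewrite /continuous_at normr0 powR0 ?gt_eqF ?(lt_le_trans ltr01) //.
  have h : (fun z : R => `|z| `^ d) @ (0:R) --> (0:R).
  apply/cvgrPdist_le => e e0.
  near=> z.
  have z1 : `|z| <= Num.min 1 e.
    by near: z; apply: (@nbhs0_le R R^o); rewrite lt_min ltr01 e0.
  rewrite sub0r normrN.
  rewrite ger0_norm ?powR_ge0 //.
  have [->|zn0] := eqVneq z 0; first by rewrite normr0 powR0 ?(ltW e0) // gt_eqF // (lt_le_trans ltr01).
  apply: (le_trans (ge1r_powR _ d1)).
    by rewrite normr_gt0 zn0 /= (le_trans z1) // ge_min lexx.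
  by rewrite (le_trans z1) // ge_min lexx orbT.
  exact: h.
have hp : {for `|x|, continuous (fun y : R => y `^ d)}.
  apply/differentiable_continuous/derivable1_diffP.
  have xp : 0 < `|x| by rewrite normr_gt0.
  by case: (is_derive1_powR d xp).
exact: (continuous_comp (@norm_continuous R R^o x) hp).
Unshelve. all: by end_near. Qed.

Lemma uf_zero (R : realType) (d : R) : 1 <= d -> is_derive (0:R) 1 (uf d) (`|0:R| `^ d).
Proof.
move=> d1.
have d0 : 0 < d by apply: lt_le_trans d1.
have dn0 : d + 1 != 0 by rewrite gt_eqF // addr_gt0.
apply/is_derive1_caratheodory.
exists (fun z => `|z| `^ d / (d + 1)); split.
- move=> z; rewrite /uf subr0 sgr0 mul0r mul0r subr0.
  have [->|zn0] := eqVneq z 0; first by rewrite sgr0 !mul0r mulr0.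
  rewrite powRD; last by rewrite (negbTE dn0).
  have -> : `|z| `^ 1 = `|z| by apply: powRr1.
  rewrite -[X in _ = _ * X](mulr_sg_norm z); ring.
- have h1 : {for (0:R), continuous (fun z : R => `|z| `^ d)} by apply: cont_abs_pow.
  have h2 : {for (0:R), continuous (fun z : R => (d + 1)^-1)} by apply: cst_continuous.
  have := continuousM h1 h2.
  exact.
- by rewrite normr0 powR0 ?gt_eqF // mul0r.
Qed.

Lemma uf_deriv (R : realType) (d x : R) : 1 <= d -> is_derive x 1 (uf d) (`|x| `^ d).
Proof.
move=> d1; have d0 : 0 < d by apply: lt_le_trans d1.
case: (ltgtP x 0) => [x0|x0|->].
- exact: uf_neg.
- exact: uf_pos.
- exact: uf_zero.
Qed.

Lemma deriv_ext (R : realType) (f g : R -> R) (x df dg : R) :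
  (forall y, f y = g y) -> is_derive x 1 f df -> df = dg -> is_derive x 1 g dg.
Proof.
move=> fg h e; apply: (near_eq_is_derive _ (is_derive_eq h e)).
by near=> y; apply: fg.
Unshelve. all: by end_near. Qed.

Definition Q0 (R : realType) (d c : R) (x : R) : R := uf d x + c * x.
Definition Dn (R : realType) (g d c : R) (y : R) : R := 1 + expR (- Q0 d c y / g).
Definition DnD (R : realType) (g d c : R) (w : R) : R :=
  expR (- Q0 d c w / g) * (- (`|w| `^ d + c) / g).

Lemma Q0_deriv (R : realType) (d c x : R) : 1 <= d ->
  is_derive x 1 (Q0 d c) (`|x| `^ d + c).
Proof.
move=> d1.
have h := is_deriveD (uf_deriv x d1) (is_deriveZ c (is_derive_id x (1:R))).
apply: (deriv_ext _ h); first by move=> y.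
by rewrite /GRing.scale /= mulr1.
Qed.

Lemma Dn_deriv (R : realType) (g d c x : R) : 1 <= d ->
  is_derive x 1 (Dn g d c) (DnD g d c x).
Proof.
move=> d1.
have h1 := is_deriveZ (- g^-1) (Q0_deriv c x d1).
have h2 := is_derive1_comp (is_derive_expR _) h1.
have h3 := is_deriveD (is_derive_cst (1:R) x (1:R)) h2.
apply: (deriv_ext _ h3).
  move=> y; change (1 + expR (- g^-1 * Q0 d c y) = 1 + expR (- Q0 d c y / g)).
  by congr (_ + expR _); ring.
change (0 + expR (- g^-1 * Q0 d c x) * (- g^-1 * (`|x| `^ d + c)) = DnD g d c x).
by rewrite /DnD add0r; congr (expR _ * _); ring.
Qed.


Definition K (R : realType) (g d c : R) (x : R) : R := g * ln (1 + expR (Q0 d c x / g)).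
Definition gK (R : realType) (g d c : R) (x : R) : R := (`|x| `^ d + c) * (Dn g d c x)^-1.

Lemma K_deriv (R : realType) (g d c x : R) : 0 < g -> 1 <= d ->
  is_derive x 1 (K g d c) (gK g d c x).
Proof.
move=> g0 d1.
have i1 := is_deriveZ (g^-1) (Q0_deriv c x d1).
have i2 := is_derive1_comp (is_derive_expR _) i1.
have i3 := is_deriveD (is_derive_cst (1:R) x (1:R)) i2.
set E := expR (g^-1 * Q0 d c x).
have Ep : 0 < 1 + E by rewrite addr_gt0 // expR_gt0.
have i4 := @is_derive1_comp R (@ln R) (cst 1 + (expR \o g^-1 \*: Q0 d c)) x _ _ (is_derive1_ln Ep) i3.
have i5 := is_deriveZ g i4.
apply: (deriv_ext _ i5).
  move=> y; change (g * ln (1 + expR (g^-1 * Q0 d c y)) = g * ln (1 + expR (Q0 d c y / g))).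
  by rewrite [Q0 d c y / g]mulrC.
change (g * ((1 + E)^-1 * (0 + E * (g^-1 * (`|x| `^ d + c)))) = gK g d c x).
rewrite /gK /Dn.
have -> : - Q0 d c x / g = - (g^-1 * Q0 d c x) by ring.
rewrite expRN -/E.
have En : E != 0 by rewrite gt_eqF // expR_gt0.
have gn : g != 0 by rewrite gt_eqF.
have En2 : 1 + E^-1 != 0 by rewrite gt_eqF // addr_gt0 // invr_gt0 expR_gt0.
field.
by rewrite En gn addrC (gt_eqF Ep).
Qed.
Lemma key_ineq (R : realType) (g d c t : R) : 0 < g -> 1 <= d -> 0 <= c ->
  2 * g * d <= c * c -> g * d - 2^-1 <= c -> 0 < t ->
  2 * g * d * t `^ (d - 1) <= (t `^ d + c) * (t `^ d + c).
Proof.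
move=> g0 d1 c0 hc1 hc2 t0.
have gd : 0 <= g * d by rewrite mulr_ge0 // ltW // (lt_le_trans ltr01).
have ud : 0 <= t `^ d by apply: powR_ge0.
case: (leP t 1) => t1.
- have T1 : t `^ (d - 1) <= 1.
    rewrite -[X in _ <= X](powRr0 t); apply: ger_powR; first by rewrite t0 t1.
    by rewrite subr_ge0.
  have T0 : 0 <= t `^ (d - 1) by apply: powR_ge0.
  have : 2 * g * d * t `^ (d - 1) <= 2 * g * d.
    by rewrite -{2}(mulr1 (2 * g * d)) ler_wpM2l // -mulrA mulr_ge0.
  nra.
- have t1' : 1 <= t by apply: ltW.
  have T1 : t `^ (d - 1) <= t `^ d.
    by apply: ler_powR => //; rewrite lerBlDr lerDl.
  have U1 : 1 <= t `^ d.
    rewrite -[X in X <= _](powRr0 t); apply: ler_powR => //; apply: le_trans d1; exact: ler01.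
  have : 2 * g * d * t `^ (d - 1) <= 2 * g * d * t `^ d.
    by rewrite ler_wpM2l // -mulrA mulr_ge0.
  nra.
Qed.

Lemma Dn_pos (R : realType) (g d c x : R) : 0 < Dn g d c x.
Proof. by rewrite /Dn addr_gt0 // expR_gt0. Qed.

Definition SD (R : realType) (g d c : R) (w : R) : R := - (Dn g d c w) ^- 2 * DnD g d c w.

Lemma S_deriv (R : realType) (g d c x : R) : 1 <= d ->
  is_derive x 1 (fun y => (Dn g d c y)^-1) (SD g d c x).
Proof.
move=> d1; have hn : Dn g d c x != 0 by rewrite gt_eqF // Dn_pos.
exact: (is_deriveV hn (Dn_deriv g c x d1)).
Qed.

Lemma SD_ge0 (R : realType) (g d c x : R) : 0 < g -> 0 <= c -> 0 <= SD g d c x.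
Proof.
move=> g0 c0; rewrite /SD /DnD mulNr -mulrN -mulrN mulr_ge0 //.
  by rewrite invr_ge0 exprn_ge0 // ltW // Dn_pos.
rewrite mulr_ge0 ?expR_ge0 // mulNr opprK divr_ge0 ?(ltW g0) //.
by rewrite addr_ge0 // powR_ge0.
Qed.

Lemma S_mono (R : realType) (g d c : R) : 0 < g -> 1 <= d -> 0 <= c ->
  {homo (fun y => (Dn g d c y)^-1) : x y / x <= y}.
Proof.
move=> g0 d1 c0 x y xy.
apply: (@mono_seg R (fun y => (Dn g d c y)^-1) (SD g d c)) => //.
- by apply: (@deriv_cont R (fun y => (Dn g d c y)^-1) (SD g d c)) => z; apply: S_deriv.
- by move=> z _; apply: S_deriv.
- by move=> z _; apply: SD_ge0.
Qed.

Lemma N_deriv_neg (R : realType) (d c w : R) : w < 0 ->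
  is_derive w 1 (fun y : R => `|y| `^ d + c) (- (d * (- w) `^ (d - 1))).
Proof.
move=> w0.
have nw : 0 < - w by rewrite oppr_gt0.
have h1 := is_derive1_powR d nw.
have h2 : is_derive w 1 (fun y : R => - y) (-1) by apply: is_deriveNid.
have h3 := is_deriveD (@is_derive1_comp R (fun u : R => u `^ d) (fun y : R => - y) w _ _ h1 h2)
  (is_derive_cst c w (1:R)).
apply: (near_eq_is_derive _ (is_derive_eq h3 _)).
  near=> y.
  have y0 : y < 0 by near: y; exact: lt_nbhsl.
  by rewrite /= ltr0_norm.
by rewrite addr0 mulrN1.
Unshelve. all: by end_near. Qed.

Definition GD (R : realType) (g d c : R) (w : R) : R :=
  (`|w| `^ d + c) * SD g d c w + (Dn g d c w)^-1 * (- (d * (- w) `^ (d - 1))).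

Lemma gK_deriv_neg (R : realType) (g d c w : R) : 1 <= d -> w < 0 ->
  is_derive w 1 (gK g d c) (GD g d c w).
Proof.
move=> d1 w0.
have h := is_deriveM (N_deriv_neg d c w0) (S_deriv g c w d1).
exact: (deriv_ext _ h).
Qed.

Lemma GD_ge0 (R : realType) (g d c w : R) : 0 < g -> 1 <= d -> 0 <= c ->
  2 * g * d <= c * c -> g * d - 2^-1 <= c -> w < 0 -> 0 <= GD g d c w.
Proof.
move=> g0 d1 c0 hc1 hc2 w0.
have t0 : 0 < - w by rewrite oppr_gt0.
have key := key_ineq g0 d1 c0 hc1 hc2 t0.
rewrite /GD /SD /DnD ltr0_norm //.
set N := (- w) `^ d + c.
set T := (- w) `^ (d - 1).
set E := expR (- Q0 d c w / g).
have -> : Dn g d c w = 1 + E by [].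
have E0 : 0 < E by apply: expR_gt0.
have E1 : 1 <= E.
  rewrite -expR0 ler_expR mulNr oppr_ge0.
  apply: mulr_le0_ge0; last by rewrite invr_ge0 ltW.
  rewrite /Q0 /uf ltr0_sg //.
  have a0 : 0 <= (d + 1)^-1 * `|w| `^ (d + 1).
    by rewrite mulr_ge0 ?powR_ge0 // invr_ge0 addr_ge0 // (le_trans ler01 d1).
  have a1 : c * w <= 0 by rewrite mulr_ge0_le0 // ltW.
  have -> : -1 / (d + 1) * `|w| `^ (d + 1) = - ((d + 1)^-1 * `|w| `^ (d + 1)) by ring.
  lra.
have T0 : 0 <= T by apply: powR_ge0.
have gn : g != 0 by rewrite gt_eqF.
have En : 1 + E != 0 by rewrite gt_eqF // addr_gt0.
have -> : N * (- (1 + E) ^- 2 * (E * (- N / g))) + (1 + E)^-1 * - (d * T)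
   = (N * N * E - g * (1 + E) * d * T) / (g * (1 + E) ^+ 2).
  by field; rewrite gn En.
have Ep : 0 < 1 + E by rewrite addr_gt0.
apply: divr_ge0; last by apply: mulr_ge0; [exact: ltW | apply: exprn_ge0; exact: ltW].
have M0 : 0 <= g * d * T by rewrite mulr_ge0 // mulr_ge0 ?ltW // (lt_le_trans ltr01).
have h1 : 0 <= (N * N - 2 * g * d * T) * E.
  by apply: mulr_ge0; [rewrite subr_ge0; exact: key | exact: ltW].
have h2 : 0 <= (g * d * T) * (E - 1) by apply: mulr_ge0 => //; rewrite subr_ge0.
nra.
Qed.

Lemma gK_cont (R : realType) (g d c : R) : 1 <= d -> continuous (gK g d c).
Proof.
move=> d1 x.
have hN : {for x, continuous (fun y : R => `|y| `^ d + c)}.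
  have h1 : {for x, continuous (fun y : R => `|y| `^ d)} by apply: cont_abs_pow.
  have h2 : {for x, continuous (fun y : R => c)} by apply: cst_continuous.
  have := continuousD h1 h2; exact.
have hS : {for x, continuous (fun y => (Dn g d c y)^-1)}.
  by apply: (@deriv_cont R (fun y => (Dn g d c y)^-1) (SD g d c)) => z; apply: S_deriv.
have := continuousM hN hS; exact.
Qed.

Lemma gK_mono (R : realType) (g d c : R) : 0 < g -> 1 <= d -> 0 <= c ->
  2 * g * d <= c * c -> g * d - 2^-1 <= c -> {homo gK g d c : x y / x <= y}.
Proof.
move=> g0 d1 c0 hc1 hc2.
have neg : forall x y, x <= y -> y <= 0 -> gK g d c x <= gK g d c y.
  move=> x y xy y0.
  apply: (@mono_seg R (gK g d c) (GD g d c)) => //.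
  - exact: gK_cont.
  - move=> z /andP[_ zy]; apply: gK_deriv_neg => //; exact: lt_le_trans zy y0.
  - move=> z /andP[_ zy]; apply: GD_ge0 => //; exact: lt_le_trans zy y0.
have pos : forall x y, 0 <= x -> x <= y -> gK g d c x <= gK g d c y.
  move=> x y x0 xy.
  have y0 : 0 <= y by apply: le_trans xy.
  rewrite /gK; apply: ler_pM.
  - by rewrite addr_ge0 // powR_ge0.
  - by rewrite invr_ge0 ltW // Dn_pos.
  - rewrite lerD2r ger0_norm // ger0_norm //.
    by apply: ge0_ler_powR => //; rewrite ?(le_trans ler01 d1) ?nnegrE.
  - exact: (S_mono g0 d1 c0 xy).
move=> x y xy.
case: (leP y 0) => y0; first exact: neg.
case: (leP 0 x) => x0; first exact: pos.
apply: (@le_trans _ _ (gK g d c 0)); first exact: neg (ltW x0) (lexx 0).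
exact: pos (lexx 0) (ltW y0).
Qed.

Lemma convex_affine (R : realType) (f : R -> R) (al be : R) :
  convex_on_R f -> convex_on_R (fun z => f (al * (z - be))).
Proof.
move=> cf a b t t0 t1 /=.
have -> : al * (t * a + (1 - t) * b - be) = t * (al * (a - be)) + (1 - t) * (al * (b - be)) by ring.
exact: cf.
Qed.

Theorem corollaryG5 (R : realType) (alpha beta gamma d c : R) :
  0 < alpha -> 0 < gamma -> 1 <= d ->
  Num.max (Num.sqrt (2 * gamma * d)) (gamma * d - 2^-1) <= c ->
  forall s : R, convex_on_R (fun shat => Lm alpha beta gamma d c shat s).
Proof.
move=> a0 g0 d1; rewrite ge_max => /andP[hs hc2] s.
have X0 : 0 <= 2 * gamma * d by rewrite mulr_ge0 ?mulr_ge0 ?ltW // (lt_le_trans ltr01).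
have s0 := sqrtr_ge0 (2 * gamma * d).
have c0 : 0 <= c by apply: le_trans hs.
have hc1 : 2 * gamma * d <= c * c.
  have e := sqr_sqrtr X0.
  rewrite -e expr2.
  by apply: ler_pM.
have cK : convex_on_R (K gamma d c).
  apply: (@convex_of_deriv R _ (gK gamma d c)).
  - by move=> x; apply: K_deriv.
  - exact: gK_mono.
have cH : convex_on_R (Hsc alpha beta gamma d c).
  exact: (convex_affine alpha beta cK).
move=> a b t t0 t1 /=.
have hH := cH a b t t0 t1.
rewrite /Lm.
set D := derive1 (Hsc alpha beta gamma d c) s.
set HH := Hsc alpha beta gamma d c.
have -> : t * (HH a - HH s - (a - s) * D) + (1 - t) * (HH b - HH s - (b - s) * D)
  = t * HH a + (1 - t) * HH b - HH s - (t * a + (1 - t) * b - s) * D by ring.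
by rewrite !lerD2r.
Qed.
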